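(* Suppose $g(S) = \sum_{v \in S} w(v)$ for nonnegative weights $w : V \to \mathbb{R}_{\ge 0}$. For every $\varepsilon > 0$, the algorithm $\mathrm{GIST}(V,g,k,\varepsilon)$ returns a set $S \subseteq V$ with $|S| \le k$ and $$f(S) \ge \left(\tfrac{2}{3} - \varepsilon\right)\cdot \mathrm{OPT}.$$
   Context: Let $V$ be a finite set of $n$ points in a metric space with metric $\mathrm{dist}$, and let $d_{\max} = \max_{u,v \in V}\mathrm{dist}(u,v)$. For $u \in V$ and $S \subseteq V$ let $\mathrm{dist}(u,S) = \min_{v \in S}\mathrm{dist}(u,v)$, with $\mathrm{dist}(u,\emptyset) = \infty$. The max-min diversity is $\mathrm{div}(S) = \min_{u,v \in S,\, u \ne v}\mathrm{dist}(u,v)$ if $|S| \ge 2$, and $\mathrm{div}(S) = d_{\max}$ if $|S| \le 1$. Let $g : 2^V \to \mathbb{R}_{\ge 0}$ be a nonnegative monotone submodular function, let $\lambda \ge 0$, let $k \ge 1$ be an integer, and let $f(S) = g(S) + \lambda\cdot \mathrm{div}(S)$. The MDMS problem is to maximize $f(S)$ subject to $S \subseteq V$, $|S| \le k$; $\mathrm{OPT}$ denotes the optimal value. $\mathrm{GreedyIndependentSet}(V,g,d,k)$: initialize $S \gets \emptyset$; for $i = 1,\dots,k$: let $C = \{v \in V\setminus S : \mathrm{dist}(v,S) \ge d\}$; if $C = \emptyset$ return $S$; otherwise pick $t \in \arg\max_{v \in C} \big(g(S\cup\{v\}) - g(S)\big)$ (ties broken arbitrarily) and set $S \gets S \cup\{t\}$.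 After the loop, return $S$. $\mathrm{GIST}(V,g,k,\varepsilon)$: set $S \gets \mathrm{GreedyIndependentSet}(V,g,0,k)$. Let $T = \{u,v\}$ be two points with $\mathrm{dist}(u,v) = d_{\max}$; if $f(T) > f(S)$ and $k \ge 2$, set $S \gets T$. Let $D = \{(1+\varepsilon)^i \cdot \varepsilon d_{\max}/2 : i \in \mathbb{Z}_{\ge 0},\ (1+\varepsilon)^i \le 2/\varepsilon\}$. For each $d \in D$: set $T \gets \mathrm{GreedyIndependentSet}(V,g,d,k)$ and if $f(T) \ge f(S)$ set $S \gets T$. Return $S$. *)

(* Defs.v *)
From HB Require Import structures.
From mathcomp Require Import all_boot all_order all_algebra.
From mathcomp Require Import reals.
Set Implicit Arguments. Unset Strict Implicit. Unset Printing Implicit Defensive.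
Import Order.TTheory GRing.Theory Num.Theory.
Local Open Scope ring_scope.

Section MDMS.
Variables (R : realType) (V : finType).

Definition is_metric (dist : V -> V -> R) : Prop :=
  [/\ forall u, dist u u = 0,
      forall u v, dist u v = 0 -> u = v,
      forall u v, dist u v = dist v u &
      forall u v x, dist u x <= dist u v + dist v x].

(* d_max = max_{u,v} dist(u,v)  (0 is a valid seed: distances are >= 0) *)
Definition dmax (dist : V -> V -> R) : R :=
  \big[Num.max/0]_(u : V) \big[Num.max/0]_(v : V) dist u v.

(* max-min diversity; seeding the min with d_max is harmless since all
   distances are <= d_max *)
Definition div (dist : V -> V -> R) (S : {set V}) : R :=
  if (2 <= #|S|)%N then
    \big[Num.min/dmax dist]_(u in S) \big[Num.min/dmax dist]_(v in S | v != u) dist u v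
  else dmax dist.

Definition fobj (g : {set V} -> R) (lam : R) (dist : V -> V -> R) (S : {set V}) : R :=
  g S + lam * div dist S.

(* OPT = max { f(S) : |S| <= k }  (f >= 0 and f(set0) is feasible, so 0 is a valid seed) *)
Definition OPT (g : {set V} -> R) (lam : R) (dist : V -> V -> R) (k : nat) : R :=
  \big[Num.max/0]_(S : {set V} | (#|S| <= k)%N) fobj g lam dist S.

(* dist(v,S) >= d, with dist(v, set0) = +oo *)
Definition far_from (dist : V -> V -> R) (d : R) (v : V) (S : {set V}) : bool :=
  [forall u in S, d <= dist v u].

Definition cand (dist : V -> V -> R) (d : R) (S : {set V}) : {set V} :=
  [set v | (v \notin S) && far_from dist d v S].

(* greedy_res g dist d i S S' : running the remaining i iterations of the loop
   of GreedyIndependentSet from current set S can return S' (for some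
   resolution of the arbitrary tie-breaking). *)
Inductive greedy_res (g : {set V} -> R) (dist : V -> V -> R) (d : R)
  : nat -> {set V} -> {set V} -> Prop :=
| gr_done S : greedy_res g dist d 0 S S
| gr_empty i S : cand dist d S = set0 -> greedy_res g dist d i.+1 S S
| gr_step i S t S' :
    t \in cand dist d S ->
    (forall v, v \in cand dist d S -> g (v |: S) - g S <= g (t |: S) - g S) ->
    greedy_res g dist d i (t |: S) S' ->
    greedy_res g dist d i.+1 S S'.

Definition GreedyIndependentSet_returns (g : {set V} -> R) (dist : V -> V -> R)
  (d : R) (k : nat) (S : {set V}) : Prop :=
  greedy_res g dist d k set0 S.

Definition threshold (dist : V -> V -> R) (eps : R) (i : nat) : R :=
  (1 + eps) ^+ i * (eps * dmax dist / 2).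

(* loop over D = { threshold i : (1+eps)^i <= 2/eps } in increasing order of i;
   since (1+eps)^i is increasing in i, D corresponds to i = 0,1,...,N, so we
   stop at the first i violating the condition. *)
Inductive gist_loop (g : {set V} -> R) (lam : R) (dist : V -> V -> R) (k : nat)
  (eps : R) : nat -> {set V} -> {set V} -> Prop :=
| gl_stop i S : ~ ((1 + eps) ^+ i <= 2 / eps) -> gist_loop g lam dist k eps i S S
| gl_cont i S T S' :
    (1 + eps) ^+ i <= 2 / eps ->
    GreedyIndependentSet_returns g dist (threshold dist eps i) k T ->
    gist_loop g lam dist k eps i.+1
      (if fobj g lam dist S <= fobj g lam dist T then T else S) S' ->
    gist_loop g lam dist k eps i S S'.

Definition GIST_returns (g : {set V} -> R) (lam : R) (dist : V -> V -> R)
  (k : nat) (eps : R) (S : {set V}) : Prop :=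
  exists S0 u v,
    [/\ GreedyIndependentSet_returns g dist 0 k S0,
        dist u v = dmax dist &
        gist_loop g lam dist k eps 0
          (if (fobj g lam dist S0 < fobj g lam dist [set u; v]) && (2 <= k)%N
           then [set u; v] else S0) S].

End MDMS.

(* Main.v *)
Require Import Defs.
From HB Require Import structures.
From mathcomp Require Import all_boot all_order all_algebra.
From mathcomp Require Import reals.
From mathcomp Require Import ring lra zify.
Set Implicit Arguments. Unset Strict Implicit. Unset Printing Implicit Defensive.
Import Order.TTheory GRing.Theory Num.Theory.
Local Open Scope ring_scope.

Section Helpers.
Variables (R : realType) (V : finType) (dist : V -> V -> R) (w : V -> R).
Hypothesis met : is_metric dist.
Hypothesis w0 : forall v, 0 <= w v.

Definition gw (S : {set V}) : R := \sum_(v in S) w v.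

Lemma dist_sym u v : dist u v = dist v u.
Proof. by case: met. Qed.

Lemma dist_tri u v x : dist u x <= dist u v + dist v x.
Proof. by case: met. Qed.

Lemma dist_ge0 u v : 0 <= dist u v.
Proof.
have h := dist_tri u v u; case: met => h0 _ _ _.
rewrite h0 (dist_sym v u) in h; lra.
Qed.

Lemma dmax_ge0 : 0 <= dmax dist.
Proof. exact: bigmax_ge_id. Qed.

Lemma dist_le_dmax u v : dist u v <= dmax dist.
Proof.
rewrite /dmax; apply: le_trans (le_bigmax _ _ u).
exact: (le_bigmax _ (fun v => dist u v) v).
Qed.

Lemma gw_add t (S : {set V}) : t \notin S -> gw (t |: S) = w t + gw S.
Proof. by move=> tS; rewrite /gw big_setU1. Qed.

Lemma gw_ge0 (S : {set V}) : 0 <= gw S.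
Proof. by apply: sumr_ge0 => v _; exact: w0. Qed.

Lemma div_ge d (S : {set V}) : d <= dmax dist ->
  (forall u v, u \in S -> v \in S -> u != v -> d <= dist u v) -> d <= div dist S.
Proof.
move=> hd hS; rewrite /div; case: ifP => // _.
apply: le_bigmin => // u uS; apply: le_bigmin => // v /andP[vS vu].
by apply: hS => //; rewrite eq_sym.
Qed.

Lemma div_ge0 (S : {set V}) : 0 <= div dist S.
Proof. by apply: div_ge; [exact: dmax_ge0| move=> *; exact: dist_ge0]. Qed.

Lemma div_le_dmax (S : {set V}) : div dist S <= dmax dist.
Proof. rewrite /div; case: ifP => // _; exact: bigmin_le_id. Qed.

Lemma div_le_pair (S : {set V}) u v : u \in S -> v \in S -> u != v -> div dist S <= dist u v.
Proof.
move=> uS vS uv; rewrite /div.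
have -> : (2 <= #|S|)%N.
  have : [set u; v] \subset S by apply/subsetP => x; rewrite !inE => /orP[]/eqP->.
  by move/subset_leq_card; rewrite cards2 uv.
apply: le_trans (bigmin_le_cond _ _ uS) _.
by apply: (bigmin_le_cond _ (fun v => dist u v)); rewrite vS eq_sym uv.
Qed.


Definition blocked (d : R) (t o : V) : bool := (o == t) || (dist o t < d).

Definition sep (d : R) (O : {set V}) : Prop :=
  forall a b, a \in O -> b \in O -> a != b -> d <= dist a b.

Lemma blocked_uniq d (O : {set V}) t o1 o2 : 0 <= d -> sep (2 * d) O ->
  o1 \in O -> o2 \in O -> blocked d t o1 -> blocked d t o2 -> o1 = o2.
Proof.
move=> d0 hO h1 h2 b1 b2; apply/eqP; apply: contraT => ne.
have := hO _ _ h1 h2 ne.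
move: b1 b2; rewrite /blocked => /orP[/eqP e1|l1] /orP[/eqP e2|l2].
- by move: ne; rewrite e1 e2 eqxx.
- by rewrite e1 dist_sym; lra.
- by rewrite e2; lra.
- have := dist_tri o1 t o2; rewrite (dist_sym t o2); lra.
Qed.

Lemma cand_of d (S : {set V}) o :
  (forall t, t \in S -> ~~ blocked d t o) -> o \in cand dist d S.
Proof.
move=> h; rewrite inE; apply/andP; split.
  apply/negP => oS; have := h o oS; by rewrite /blocked eqxx.
apply/forallP => u; apply/implyP => uS.
by have := h u uS; rewrite /blocked negb_or => /andP[_]; rewrite -leNgt.
Qed.

Lemma greedy_main d (O : {set V}) : 0 <= d -> sep (2 * d) O ->
  forall i S S', greedy_res gw dist d i S S' ->
  forall U : {set V}, U \subset O ->
  (forall o t, o \in U -> t \in S -> ~~ blocked d t o) -> (#|U| <= i)%N ->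
  gw S + gw U <= gw S'.
Proof.
move=> d0 sepO i0 S0 S0'; elim => [S|i S Hc|i S t S' Ht Hmax Hrest IH] U sUO hU cU.
- move: cU; rewrite leqn0 cards_eq0 => /eqP->; by rewrite /gw big_set0 addr0.
- have -> : U = set0.
    apply/setP => o; rewrite inE; apply/negP => oU.
    by have := cand_of (fun t tS => hU o t oU tS); rewrite Hc inE.
  by rewrite /gw big_set0 addr0.
- have tS : t \notin S by move: Ht; rewrite inE => /andP[].
  case: (set_0Vmem U) => [->|[o0 o0U]].
    have e0 : forall o t', o \in (set0 : {set V}) -> t' \in t |: S -> ~~ blocked d t' o.
      by move=> o t'; rewrite inE.
    have := IH set0 (sub0set _) e0; rewrite cards0 => /(_ isT).
    rewrite gw_add // /gw big_set0 => h; have := w0 t; lra.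
  have [o [oU ou]] : exists o, o \in U /\
      forall o', o' \in U -> blocked d t o' -> o' = o.
    case: (pickP [pred x in U | blocked d t x]) => [o /andP[oU bo] | nob].
      exists o; split => // o' o'U bo'.
      apply: (blocked_uniq d0 sepO) bo' bo; by apply: (subsetP sUO).
    exists o0; split => // o' o'U bo'.
    by have := nob o'; rewrite /= o'U bo'.
  have oc := cand_of (fun t tS => hU o t oU tS).
  have oS : o \notin S by move: oc; rewrite inE => /andP[].
  have wo := Hmax o oc; rewrite !gw_add // in wo.
  have hIH := IH (U :\ o).
  have h1 : U :\ o \subset O by apply: subset_trans sUO; exact: subsetDl.
  have h2 : forall o' t', o' \in U :\ o -> t' \in t |: S -> ~~ blocked d t' o'.
    move=> o' t'; rewrite !inE => /andP[o'o o'U] /orP[/eqP->|t'S]; last exact: hU.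
    apply/negP => b; have := ou o' o'U b; by move/eqP; rewrite (negbTE o'o).
  have h3 : (#|U :\ o| <= i)%N.
    by move: cU; rewrite (cardsD1 o U) oU.
  have := hIH h1 h2 h3; rewrite gw_add // /gw (big_setD1 o oU) /=.
  rewrite -/(gw (U :\ o)) => h; lra.
Qed.

Lemma greedy_size d i (S S' : {set V}) : greedy_res gw dist d i S S' ->
  (#|S'| <= #|S| + i)%N.
Proof.
elim => [S0|i0 S0 _|i0 S0 t S1 Ht _ _ IH]; rewrite ?addn0 ?leq_addr //.
by move: IH; rewrite cardsU1 /=; lia.
Qed.

Lemma greedy_indep d i (S S' : {set V}) : greedy_res gw dist d i S S' ->
  sep d S -> sep d S'.
Proof.
elim => [//|//|i0 S0 t S1 Ht _ _ IH] hS; apply: IH.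
move: Ht; rewrite inE => /andP[_ /forallP hf].
have ht : forall u, u \in S0 -> d <= dist t u by move=> u uS; exact: (implyP (hf u)).
move=> a b; rewrite !inE => /orP[/eqP->|aS] /orP[/eqP->|bS] ab.
- by rewrite eqxx in ab.
- exact: ht.
- rewrite dist_sym; exact: ht.
- exact: hS.
Qed.


Lemma find_switch (P : pred nat) N : P 0%N -> ~~ P N -> exists j, P j /\ ~~ P j.+1.
Proof.
elim: N => [-> //|N IH] P0 PN.
case PNb: (P N); first by exists N; rewrite PNb.
by apply: IH => //; rewrite PNb.
Qed.

Lemma bernoulli (eps : R) n : 0 <= eps -> 1 + n%:R * eps <= (1 + eps) ^+ n.
Proof.
move=> e0; elim: n => [|n IH]; first by rewrite mul0r addr0 expr0.
rewrite exprS -natr1.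
have h : 0 <= n%:R * eps by rewrite mulr_ge0 // ler0n.
have e1 : 0 <= 1 + eps by lra.
have h2 := ler_wpM2l e1 IH.
apply: le_trans h2; have h3 : 0 <= n%:R * eps * eps by rewrite mulr_ge0.
nra.
Qed.

Lemma exists_j (eps m dO : R) : 0 < eps -> 0 < m -> eps * m <= dO ->
  exists j, (1 + eps) ^+ j * (eps * m) <= dO /\ dO < (1 + eps) ^+ j.+1 * (eps * m).
Proof.
move=> e0 m0 hd.
pose P := fun j => (1 + eps) ^+ j * (eps * m) <= dO.
have P0 : P 0%N by rewrite /P expr0 mul1r.
have em0 : 0 < eps * eps * m by rewrite !mulr_gt0.
have dO0 : 0 <= dO / (eps * eps * m).
  have : 0 < eps * m by rewrite mulr_gt0.
  by move=> h; rewrite divr_ge0 // ?ltW //; lra.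
have hN := archi_boundP dO0.
set N := Num.bound _ in hN.
move: hN; rewrite ltr_pdivrMr // => hN.
have hb := bernoulli N (ltW e0).
have NP : ~~ P N.
  rewrite /P -ltNge.
  have h1 : N%:R * eps * (eps * m) <= (1 + eps) ^+ N * (eps * m).
    apply: ler_wpM2r; first by rewrite ltW // mulr_gt0.
    lra.
  apply: lt_le_trans h1.
  by have -> : N%:R * eps * (eps * m) = N%:R * (eps * eps * m) by ring.
have [j [Pj nPj]] := find_switch P0 NP.
by exists j; split => //; rewrite ltNge.
Qed.

Lemma loop_prop lam k eps i (S S' : {set V}) : 0 < eps ->
  gist_loop gw lam dist k eps i S S' -> (#|S| <= k)%N ->
  [/\ (#|S'| <= k)%N, fobj gw lam dist S <= fobj gw lam dist S' &
   forall j, (i <= j)%N -> (1 + eps) ^+ j <= 2 / eps ->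
   exists T, greedy_res gw dist (threshold dist eps j) k set0 T /\
             fobj gw lam dist T <= fobj gw lam dist S'].
Proof.
move=> e0; elim => [i0 S0 hn|i0 S0 T S1 hc hT hl IH] cS.
- split => // j ij hj; exfalso; apply: hn; apply: le_trans hj.
  by rewrite ler_eXn2l //; lra.
- have cT : (#|T| <= k)%N by have := greedy_size hT; rewrite cards0.
  have c2 : (#|if (fobj gw lam dist S0 <= fobj gw lam dist T)%R then T else S0| <= k)%N.
    by case: ifP.
  have [cS1 le1 hj] := IH c2.
  have hS0 : fobj gw lam dist S0 <= fobj gw lam dist S1.
    by apply: le_trans le1; case: ifP => // h.
  have hTT : fobj gw lam dist T <= fobj gw lam dist S1.
    apply: le_trans le1; case: ifP => // /negbT; rewrite -ltNge => /ltW h; exact: h.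
  split => // j ij hjj.
  case: (ltngtP i0 j) ij => // [ij _|<- _]; first exact: hj.
  by exists T.
Qed.


Lemma fobj_ge0 lam (S : {set V}) : 0 <= lam -> 0 <= fobj gw lam dist S.
Proof.
move=> l0; rewrite /fobj; apply: addr_ge0; first exact: gw_ge0.
by apply: mulr_ge0 => //; exact: div_ge0.
Qed.

End Helpers.

Lemma final_arith (R : realType) (eps G X Z F : R) : 0 < eps -> 0 <= G -> 0 <= X -> 0 <= Z ->
  G + Z <= F -> X <= F -> X <= 2 * (1 + eps) * Z -> (2 / 3 - eps) * (G + X) <= F.
Proof.
move=> e0 G0 X0 Z0 h1 h2 h3.
have h4 : (1 / 3 - eps) * X <= 2 / 3 * Z.
  case: (lerP (1 / 3) eps) => he; first by nra.
  have h5 : (1 / 3 - eps) * X <= (1 / 3 - eps) * (2 * (1 + eps) * Z).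
    by apply: ler_wpM2l => //; lra.
  apply: le_trans h5 _; nra.
nra.
Qed.

Lemma small_arith (R : realType) (eps G X Y F : R) : 0 < eps -> 0 < 2 / 3 - eps ->
  0 <= G -> 0 <= X -> G <= F -> Y <= F -> X <= eps * Y -> (2 / 3 - eps) * (G + X) <= F.
Proof.
move=> e0 c0 G0 X0 h1 h2 h3.
have Y0 : 0 <= Y by nra.
have h4 : (2 / 3 - eps) * X <= (2 / 3 - eps) * (eps * Y) by apply: ler_wpM2l => //; lra.
have h5 : (2 / 3 - eps) * eps <= 1 / 3 by nra.
have h6 : (2 / 3 - eps) * (eps * Y) <= 1 / 3 * Y.
  by rewrite mulrA; apply: ler_wpM2r.
nra.
Qed.


Unset Implicit Arguments.

Theorem theorem3p3 (R : realType) (V : finType) (dist : V -> V -> R)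
  (w : V -> R) (lam eps : R) (k : nat) :
  is_metric dist ->
  (forall v, 0 <= w v) ->
  0 <= lam ->
  (1 <= k)%N ->
  0 < eps ->
  let g := fun S : {set V} => \sum_(v in S) w v in
  forall S : {set V},
    GIST_returns g lam dist k eps S ->
    (#|S| <= k)%N /\
    (2 / 3 - eps) * OPT g lam dist k <= fobj g lam dist S.
Proof.
move=> met w0 lam0 k1 e0 g S [S0 [u [v [hS0 huv hloop]]]].
have eg : g = gw w by [].
clearbody g; subst g.
set f := fobj (gw w) lam dist.
set init := (if _ then _ else _) in hloop.
have cS0 : (#|S0| <= k)%N by have := greedy_size hS0; rewrite cards0.
have cinit : (#|init| <= k)%N.
  rewrite /init; case: ifP => // /andP[_ hk].
  by apply: leq_trans hk; rewrite cards2; case: (u != v).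
have [cS fle hj] := loop_prop e0 hloop cinit.
have hS0F : f S0 <= f S.
  apply: le_trans fle; rewrite /init; case: ifP => // /andP[h _]; exact: ltW.
have hpF : (2 <= k)%N -> f [set u; v] <= f S.
  move=> hk; apply: le_trans fle; rewrite /init hk andbT.
  by case: ifP => // /negbT; rewrite -leNgt.
have F0 : 0 <= f S by exact: fobj_ge0.
split => //.
have OPT0 : 0 <= OPT (gw w) lam dist k by exact: bigmax_ge_id.
case: (lerP (2 / 3 - eps) 0) => hc.
  exact: le_trans (mulr_le0_ge0 hc OPT0) F0.
rewrite /OPT; elim/big_ind: _ => [|x y hx hy|O cO].
- by rewrite mulr0.
- by case/orP: (le_total x y) => h; [rewrite (max_idPr h) | rewrite (max_idPl h)].
set dO := div dist O; set G := gw w O.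
have hG : G <= gw w S0.
  have sep0 : sep dist (2 * 0) O by rewrite mulr0 => a b _ _ _; exact: dist_ge0.
  have := greedy_main met w0 (lexx 0) sep0 hS0 (subxx O).
  rewrite /gw big_set0 add0r; apply => // o t _; by rewrite inE.
have hfS0 : gw w S0 <= f S0.
  rewrite /f /fobj lerDl; apply: mulr_ge0 => //; exact: div_ge0.
have G0 : 0 <= G by exact: gw_ge0.
have dO0 : 0 <= dO by exact: div_ge0.
have dOm : dO <= dmax dist by exact: div_le_dmax.
rewrite /fobj -/dO -/G.
case: (leqP 2 k) => hk; last first.
  have hS0' : div dist S0 = dmax dist.
    by rewrite /div ifN // -ltnNge (leq_ltn_trans cS0 hk).
  have : G + lam * dO <= f S.
    apply: le_trans hS0F; rewrite /f /fobj hS0'.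
    exact: lerD hG (ler_wpM2l lam0 dOm).
  have : 0 <= lam * dO by rewrite mulr_ge0.
  move=> h1 h2; apply: le_trans h2.
  rewrite -[X in _ <= X]mul1r; apply: ler_wpM2r; lra.
have hY : lam * dmax dist <= f S.
  apply: le_trans (hpF hk); rewrite /f /fobj.
  have : dmax dist <= div dist [set u; v].
    apply: div_ge => // a b; rewrite !inE => /orP[]/eqP-> /orP[]/eqP-> ab.
    - by rewrite eqxx in ab.
    - by rewrite huv.
    - by rewrite dist_sym // huv.
    - by rewrite eqxx in ab.
  move=> h; have := ler_wpM2l lam0 h; have := gw_ge0 w0 [set u; v]; lra.
have hX : lam * dO <= lam * dmax dist by exact: ler_wpM2l.
have X0 : 0 <= lam * dO by rewrite mulr_ge0.
case: (ltrP dO (eps * dmax dist)) => hd.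
  apply: (small_arith e0 hc G0 X0 _ hY); first by lra.
  have := ler_wpM2l lam0 (ltW hd); rewrite mulrCA; lra.
have m0 := dmax_ge0 dist.
case: (eqVneq (dmax dist) 0) => hm.
  have -> : dO = 0 by lra.
  have H := le_trans hG (le_trans hfS0 hS0F).
  rewrite mulr0 addr0; apply: le_trans H.
  rewrite -[X in _ <= X]mul1r; apply: ler_wpM2r; lra.
have mp : 0 < dmax dist by rewrite lt_def hm m0.
have [j [hj1 hj2]] := exists_j e0 mp hd.
set th := threshold dist eps j.
have pj0 : 0 <= (1 + eps) ^+ j by apply: exprn_ge0; lra.
have hth : 2 * th = (1 + eps) ^+ j * (eps * dmax dist).
  by rewrite /th /threshold; field.
have hadm : (1 + eps) ^+ j <= 2 / eps.
  rewrite ler_pdivlMr //.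
  have h : (1 + eps) ^+ j * eps * dmax dist <= 1 * dmax dist.
    by rewrite mul1r -mulrA; lra.
  rewrite ler_pM2r // in h; lra.
have [T [hT hTF]] := hj j (leq0n j) hadm.
have th0 : 0 <= th by have := mulr_ge0 pj0 (mulr_ge0 (ltW e0) m0); lra.
have sepO : sep dist (2 * th) O.
  move=> a b aO bO ab; apply: (le_trans _ (div_le_pair dist aO bO ab)).
  by rewrite hth.
have hGT : G <= gw w T.
  have := greedy_main met w0 th0 sepO hT (subxx O).
  rewrite /gw big_set0 add0r; apply => // o t _; by rewrite inE.
have sepT : sep dist th T.
  apply: (greedy_indep met hT) => a b; by rewrite inE.
have hdivT : th <= div dist T by apply: div_ge => //; lra.
have hfT : G + lam * th <= f S.
  apply: le_trans hTF; rewrite /f /fobj.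
  have := ler_wpM2l lam0 hdivT; lra.
have hXZ : lam * dO <= 2 * (1 + eps) * (lam * th).
  rewrite exprS -mulrA -hth in hj2.
  have := ler_wpM2l lam0 (ltW hj2).
  by have -> : 2 * (1 + eps) * (lam * th) = lam * ((1 + eps) * (2 * th)) by ring.
have lth0 : 0 <= lam * th by rewrite mulr_ge0.
apply: (final_arith e0 G0 X0 lth0 hfT) => //; lra.
Qed.
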